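(* Let $\mathcal{H}$ be a Hilbert space, $D\in L(\mathcal{H})$ positive, and let $\mathcal{S}\subseteq\mathcal{T}$ be closed subspaces with $P_\mathcal{T}D=DP_\mathcal{T}$, so that $D=\begin{pmatrix} D_1&0\\0&D_2\end{pmatrix}$ with respect to $\mathcal{H}=\mathcal{T}\oplus\mathcal{T}^\perp$. Suppose $R(P_\mathcal{S}DP_\mathcal{S})$ is closed. Then $$P_{D,\mathcal{S}}=\begin{pmatrix} P_{D_1,\mathcal{S}}&0\\0&0\end{pmatrix}\quad\text{with respect to }\mathcal{T}\oplus\mathcal{T}^\perp,$$ where $P_{D_1,\mathcal{S}}$ is taken with $D_1$ regarded as an operator on the Hilbert space $\mathcal{T}$.
   Context: $P_\mathcal{M}$ denotes the orthogonal projection onto a closed subspace $\mathcal{M}$. For positive bounded $D$ on a Hilbert space $\mathcal{K}$ and a closed subspace $\mathcal{S}\subseteq\mathcal{K}$, the pair $(D,\mathcal{S})$ is compatible if there exists a bounded idempotent $Q$ on $\mathcal{K}$ with range $\mathcal{S}$ and $DQ=Q^*D$; writing $D=\begin{pmatrix} a & b\\ b^* & c\end{pmatrix}$ with respect to $\mathcal{K}=\mathcal{S}\oplus(\mathcal{K}\ominus\mathcal{S})$, this holds iff $R(b)\subseteq R(a)$, and then $P_{D,\mathcal{S}}:=\begin{pmatrix} 1 & d\\ 0&0\end{pmatrix}$, with $d$ the unique bounded operator $\mathcal{K}\ominus\mathcal{S}\to\mathcal{S}$ satisfying $ad=b$ and $R(d)\subseteq\overline{R(a)}$. When $R(a)$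 is closed the pair is compatible and $d=a^\dagger b$ (Moore–Penrose inverse). *)

(* Defs.v *)
From Stdlib Require Import ClassicalEpsilon.
From mathcomp Require Import all_boot all_algebra.
From mathcomp Require Import all_classical all_reals all_analysis.
From mathcomp Require Import complex.
Import Num.Theory GRing.Theory.
Set Implicit Arguments. Unset Strict Implicit. Unset Printing Implicit Defensive.
Local Open Scope ring_scope.
Local Open Scope classical_set_scope.

Record inner_product (R : realType) (H : normedModType R[i]) := InnerProduct {
  ip :> H -> H -> R[i];
  ipDl : forall x y z, ip (x + y) z = ip x z + ip y z;
  ipZl : forall (a : R[i]) x y, ip (a *: x) y = a * ip x y;
  ipC : forall x y, ip y x = (ip x y)^*;
  ip_norm : forall x, ip x x = `|x| ^+ 2
}.

Section Defs.
Context {R : realType} {H : completeNormedModType R[i]} (ip : inner_product H).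

Definition subspace (M : set H) : Prop :=
  M 0 /\ (forall (a : R[i]) x y, M x -> M y -> M (a *: x + y)).
Definition closed_subspace (M : set H) : Prop := subspace M /\ closed M.

Definition orth (M : set H) : set H := [set x | forall m, M m -> ip x m = 0].

(* P_M : the orthogonal projection onto M (the y in M with x - y orthogonal
   to M; it exists and is unique for closed subspaces of a Hilbert space). *)
Definition oproj (M : set H) (x : H) : H :=
  epsilon (inhabits 0) (fun y => M y /\ orth M (x - y)).

Definition bounded_op (A : H -> H) : Prop :=
  (forall (a : R[i]) x y, A (a *: x + y) = a *: A x + A y) /\ continuous A.

Definition positive_op (A : H -> H) : Prop :=
  bounded_op A /\ forall x, 0 <= ip (A x) x.

(* Operators on the Hilbert space K (a closed subspace of H, with the
   restricted inner product) are represented by functions H -> H, of which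
   only the values on K matter.  [bounded_on K A]: A is a bounded linear map
   from the closed subspace K into the closed subspace L. *)
Definition bounded_on (K L : set H) (A : H -> H) : Prop :=
  (forall x, K x -> L (A x)) /\
  (forall (a : R[i]) x y, K x -> K y -> A (a *: x + y) = a *: A x + A y) /\
  {within K, continuous A}.

(* Compatibility of (D, S) in the Hilbert space K (D an operator on K,
   S a closed subspace of K): there is a bounded idempotent Q on K with
   range S and D Q = Q^* D, i.e. <D Q x, y> = <D x, Q y> for x, y in K. *)
Definition compatible_in (K : set H) (D : H -> H) (S : set H) : Prop :=
  exists Q : H -> H,
    [/\ bounded_on K K Q,
        (forall x, K x -> Q (Q x) = Q x),
        Q @` K = S &
        (forall x y, K x -> K y -> ip (D (Q x)) y = ip (D x) (Q y))].

(* With respect to K = S (+) (K (-) S), D = (a b ; b^* c) with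
   a = P_S D|_S and b = P_S D|_(K(-)S).  [dfactor_in K D S d]: d is a bounded
   operator K (-) S -> S with a d = b and R(d) contained in the closure of R(a). *)
Definition dfactor_in (K : set H) (D : H -> H) (S : set H) (d : H -> H) : Prop :=
  let KmS := K `&` orth S in
  [/\ bounded_on KmS S d,
      (forall y, KmS y -> oproj S (D (d y)) = oproj S (D y)) &
      (forall y, KmS y -> closure [set oproj S (D s) | s in S] (d y))].

(* P_{D,S} in the Hilbert space K: the operator (1 d ; 0 0) w.r.t.
   K = S (+) (K (-) S), where d is the (unique) operator of [dfactor_in].
   For x in K, the S-component is P_S x and the (K(-)S)-component is x - P_S x. *)
Definition PDS_in (K : set H) (D : H -> H) (S : set H) (x : H) : H :=
  let d := epsilon (inhabits (fun _ : H => 0)) (dfactor_in K D S) in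
  oproj S x + d (x - oproj S x).

End Defs.

(* Main.v *)
From Pilot Require Import Defs.
From HB Require Import structures.
From mathcomp Require Import all_boot all_order all_algebra.
From mathcomp Require Import all_classical all_reals all_analysis.
From mathcomp Require Import complex.
From mathcomp Require Import ring lra.
From Stdlib Require Import ClassicalEpsilon.
Import Order.TTheory Num.Theory GRing.Theory.
Import numFieldNormedType.Exports.
Set Implicit Arguments. Unset Strict Implicit. Unset Printing Implicit Defensive.
Local Open Scope complex_scope.
Local Open Scope ring_scope.
Local Open Scope classical_set_scope.

Definition HR (R : realType) (H : completeNormedModType R[i]) : Type := H.

Section HRdefs.
Variables (R : realType) (H : completeNormedModType R[i]).
Definition nr (x : H) : R := complex.Re `|x|.
Lemma normE (x : H) : `|x| = (nr x)%:C.
Proof. by rewrite /nr RRe_real // ger0_real. Qed.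
Lemma nr_ge0 x : 0 <= nr x.
Proof. by rewrite -ler0c -normE. Qed.
Lemma nrD x y : nr (x + y) <= nr x + nr y.
Proof. by rewrite -lecR rmorphD /= -!normE ler_normD. Qed.
Lemma nrZ (a : R[i]) x : nr (a *: x) = complex.Re `|a| * nr x.
Proof. by apply: complexI; rewrite rmorphM /= -normE RRe_real ?normrZ -?normE // ger0_real. Qed.
Lemma nr_eq0 x : nr x = 0 -> x = 0.
Proof. by move=> h; apply/normr0_eq0; rewrite normE h. Qed.
Definition scR (r : R) (x : HR H) : HR H := (r%:C : R[i]) *: (x : H).
End HRdefs.

HB.instance Definition _ (R : realType) (H : completeNormedModType R[i]) :=
  Choice.on (HR H).
HB.instance Definition _ (R : realType) (H : completeNormedModType R[i]) :=
  GRing.Zmodule.on (HR H).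

Section HRlmod.
Variables (R : realType) (H : completeNormedModType R[i]).
Lemma scRA a b (v : HR H) : scR a (scR b v) = scR (a * b) v.
Proof. by rewrite /scR scalerA rmorphM. Qed.
Lemma scR1 (v : HR H) : scR 1 v = v.
Proof. by rewrite /scR scale1r. Qed.
Lemma scRDr a (u v : HR H) : scR a (u + v) = scR a u + scR a v.
Proof. by rewrite /scR scalerDr. Qed.
Lemma scRDl (v : HR H) a b : scR (a + b) v = scR a v + scR b v.
Proof. by rewrite /scR rmorphD scalerDl. Qed.
End HRlmod.

HB.instance Definition _ (R : realType) (H : completeNormedModType R[i]) :=
  @GRing.Zmodule_isLmodule.Build R (HR H) (@scR R H) (@scRA R H) (@scR1 R H) (@scRDr R H) (@scRDl R H).

Section HRnorm.
Variables (R : realType) (H : completeNormedModType R[i]).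
Lemma nrRD (x y : HR H) : nr (x + y) <= nr x + nr y.
Proof. exact: nrD. Qed.
Lemma nrRZ (l : R) (x : HR H) : nr (l *: x) = `|l| * nr x.
Proof. rewrite /GRing.scale /= /scR nrZ; congr (_ * _).
by rewrite normc_def /= expr0n /= addr0 sqrtr_sqr. Qed.
Lemma nrR0 (x : HR H) : nr x = 0 -> x = 0.
Proof. exact: nr_eq0. Qed.
End HRnorm.

HB.instance Definition _ (R : realType) (H : completeNormedModType R[i]) :=
  @Lmodule_isNormed.Build R (HR H) (@nr R H) (@nrRD R H) (@nrRZ R H) (@nrR0 R H).

Section HRcomplete.
Variables (R : realType) (H : completeNormedModType R[i]).
Lemma posC (e : R[i]) : 0 < e -> e = (complex.Re e)%:C /\ 0 < complex.Re e.
Proof. case: e => a b; rewrite ltcE /= => /andP[/eqP hb ha]; split => //. by rewrite hb. Qed.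

Lemma HR_complete (F : set_system (HR H)) : ProperFilter F -> cauchy F -> cvg F.
Proof.
move=> FF /cauchyP Fc.
have FcH : cauchy (F : set_system H).
  apply: cauchy_exP => e /posC [-> he].
  have [x Fx] := Fc _ he; exists x.
  apply: filterS Fx => y; rewrite -!ball_normE /= => h.
  by rewrite normE ltcR.
have /cvg_ex [l Fl] := @cauchy_cvg H (F : set_system H) FF FcH.
apply/cvg_ex; exists (l : HR H).
apply/fcvgrPdist_lt => e he.
move/fcvgrPdist_lt: Fl => /(_ (e%:C)); rewrite ltcR => /(_ he).
by apply: filterS => y; rewrite normE ltcR.
Qed.
End HRcomplete.

HB.instance Definition _ (R : realType) (H : completeNormedModType R[i]) :=
  Uniform_isComplete.Build (HR H) (@HR_complete R H).

Section IP.
Variables (R : realType) (H : completeNormedModType R[i]) (ip : inner_product H).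

Lemma ip0l y : ip 0 y = 0.
Proof. by have := ipZl ip 0 0 y; rewrite scale0r mul0r. Qed.
Lemma ipNl x y : ip (- x) y = - ip x y.
Proof. by rewrite -scaleN1r ipZl mulN1r. Qed.
Lemma ipBl x z y : ip (x - z) y = ip x y - ip z y.
Proof. by rewrite ipDl ipNl. Qed.
Lemma ipDr x y z : ip x (y + z) = ip x y + ip x z.
Proof. by rewrite [LHS]ipC ipDl rmorphD /= -!ipC. Qed.
Lemma ipZr a x y : ip x (a *: y) = a^* * ip x y.
Proof. by rewrite [LHS]ipC ipZl rmorphM /= -!ipC. Qed.
Lemma ip0r x : ip x 0 = 0.
Proof. by rewrite [LHS]ipC ip0l conjC0. Qed.
Lemma ipNr x y : ip x (- y) = - ip x y.
Proof. by rewrite [LHS]ipC ipNl rmorphN /= -ipC. Qed.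
Lemma ipBr x y z : ip x (y - z) = ip x y - ip x z.
Proof. by rewrite ipDr ipNr. Qed.

Lemma ip_nr x : ip x x = (nr x ^+ 2)%:C.
Proof. by rewrite ip_norm normE rmorphXn. Qed.

Lemma ip_eq0 x : ip x x = 0 -> x = 0.
Proof.
rewrite ip_nr => /eqP; rewrite -(rmorph0 (real_complex R)) => /eqP /complexI /eqP.
by rewrite expf_eq0 /= => /eqP /nr_eq0.
Qed.

Lemma pythag a b : ip a b = 0 -> nr (a + b) ^+ 2 = nr a ^+ 2 + nr b ^+ 2.
Proof.
move=> h; apply: complexI; rewrite rmorphD /= -!ip_nr ipDl !ipDr h.
by rewrite [ip b a]ipC h conjC0 !addr0 add0r.
Qed.

Lemma ReC (a : R) : complex.Re a%:C = a. Proof. by []. Qed.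

Lemma nrC (a : R[i]) : `|a| = (complex.Re `|a|)%:C.
Proof. by rewrite RRe_real // ger0_real. Qed.

Lemma CS x y : complex.Re `|ip x y| <= nr x * nr y.
Proof.
have [->|y0] := eqVneq y 0.
  by rewrite ip0r normr0 /= (_ : nr 0 = 0) ?mulr0 // /nr normr0.
have ny : 0 < nr y by rewrite lt_def nr_ge0 andbT; apply/eqP => /nr_eq0; apply/eqP.
pose t := ip x y / ip y y.
have hyy : ip y y != 0 by rewrite ip_nr -(rmorph0 (real_complex R)) (inj_eq (@complexI _)) expf_neq0 // gt_eqF.
have hw : ip (x - t *: y) y = 0 by rewrite ipBl ipZl /t divfK // subrr.
have hw' : ip (x - t *: y) (t *: y) = 0 by rewrite ipZr hw mulr0.
have := pythag hw'; rewrite subrK => e.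
have : nr (t *: y) ^+ 2 <= nr x ^+ 2 by rewrite e lerDr sqr_ge0.
rewrite nrZ /t normf_div exprMn.
set c := complex.Re `|ip x y|.
have -> : complex.Re (`|ip x y| / `|ip y y|) = c / nr y ^+ 2.
  rewrite ip_nr (nrC (ip x y)) -/c.
  by rewrite ger0_norm ?ler0c ?sqr_ge0 // -rmorphV ?unitfE ?sqrf_eq0 ?gt_eqF // -rmorphM.
move=> h.
have Y0 : 0 < nr y ^+ 2 by rewrite exprn_gt0.
have cge : 0 <= c by rewrite /c -ler0c -nrC.
have h2 : c ^+ 2 <= (nr x * nr y) ^+ 2.
  have -> : c ^+ 2 = (c / nr y ^+ 2) ^+ 2 * nr y ^+ 2 * nr y ^+ 2.
    by field; rewrite gt_eqF.
  by rewrite [(nr x * nr y) ^+ 2]exprMn (ler_pM2r Y0).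
by rewrite -(@ler_pXn2r _ 2) // ?nnegrE ?mulr_ge0 ?nr_ge0.
Qed.
End IP.

Section Topo.
Variables (R : realType) (H : completeNormedModType R[i]).

Lemma ltr0c (k : R) : (0 < k%:C) = (0 < k).
Proof. by rewrite ltcE /= eqxx. Qed.

Lemma nbhsHP (x : H) (A : set H) :
  nbhs x A <-> exists2 e : R, 0 < e & forall y, nr (x - y) < e -> A y.
Proof.
split.
- move=> /nbhs_normP [e e0 sub]; have [ee he] := posC e0.
  exists (complex.Re e) => // y hy; apply: sub; rewrite /ball_ /= ee normE ltcR //.
- move=> [e he sub]; apply/nbhs_normP; exists e%:C; first by rewrite /= ltr0c.
  by move=> y; rewrite /ball_ /= normE ltcR; exact: sub.
Qed.

Lemma contHP (f : H -> H) :
  (forall x e, 0 < e -> exists2 d, 0 < d & forall y, nr (x - y) < d -> nr (f x - f y) < e)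
  <-> continuous f.
Proof.
split.
- move=> hc x; apply/cvgrPdist_lt => e /posC[ee he].
  have [d hd hf] := hc x _ he; apply/nbhsHP; exists d => // y /hf.
  by rewrite ee normE ltcR.
- move=> cont x e he; have := cont x; move/cvgrPdist_lt => /(_ e%:C).
  rewrite ltr0c => /(_ he) /nbhsHP [d hd h]; exists d => // y /h.
  by rewrite normE ltcR.
Qed.

Lemma cvgHP (u : nat -> H) (l : H) :
  u @ \oo --> l <-> forall e, 0 < e -> exists N, forall n, (N <= n)%N -> nr (l - u n) < e.
Proof.
split.
- move/cvgrPdist_lt => h e he.
  have he' : 0 < e%:C by rewrite ltr0c.
  have [N _ hN] := h _ he'.
  by exists N => n /hN /=; rewrite normE ltcR.
- move=> h; apply/cvgrPdist_lt => e /posC [ee he]; have [N hN] := h _ he.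
  exists N => // n /hN /=; by rewrite ee normE ltcR.
Qed.

Lemma cauchyH (u : nat -> H) :
  (forall e, 0 < e -> exists N, forall n m, (N <= n)%N -> (N <= m)%N -> nr (u n - u m) < e) ->
  exists l : H, u @ \oo --> l.
Proof.
move=> hc.
have hC : cauchy (u @ \oo).
  apply: cauchy_exP => e /posC [ee he].
  have [N hN] := hc _ he; exists (u N); exists N => // n /= hn.
  by rewrite -ball_normE /= ee normE ltcR; apply: hN.
exact/cvg_ex/(@cauchy_cvg H (u @ \oo) _ hC).
Qed.

End Topo.

Lemma archi_inv (R : realType) (c : R) : 0 < c -> exists N : nat, N.+1%:R^-1 < c.
Proof.
move=> c0; exists (Num.trunc c^-1).
have : c^-1 < (Num.trunc c^-1).+1%:R by rewrite -truncn_lt_nat ?ltnSn // invr_ge0 ltW.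
by rewrite -[X in _ -> _ < X]invrK ltf_pV2 ?posrE ?invr_gt0 ?ltr0Sn.
Qed.

Section CR.
Variable R : realType.
Lemma rcD (a b : R) : (a + b)%:C = a%:C + b%:C. Proof. exact: rmorphD. Qed.
Lemma rcB (a b : R) : (a - b)%:C = a%:C - b%:C. Proof. exact: rmorphB. Qed.
Lemma rcM (a b : R) : (a * b)%:C = a%:C * b%:C. Proof. exact: rmorphM. Qed.
Lemma rcX (a : R) n : (a ^+ n)%:C = a%:C ^+ n. Proof. exact: rmorphXn. Qed.
Lemma c2 : 2%:C = 2 :> R[i]. Proof. exact: (rmorph_nat (real_complex R) 2). Qed.
End CR.

Lemma nrN (R : realType) (H : completeNormedModType R[i]) (x : H) : nr (- x) = nr x.
Proof. by rewrite /nr normrN. Qed.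
Lemma nr0 (R : realType) (H : completeNormedModType R[i]) : nr (0 : H) = 0.
Proof. by rewrite /nr normr0. Qed.

Section Proj.
Variables (R : realType) (H : completeNormedModType R[i]) (ip : inner_product H).

Section Sub.
Variable M : set H.
Hypothesis hM : Pilot.Defs.subspace M.
Lemma sub0 : M 0. Proof. exact: (proj1 hM). Qed.
Lemma subD x y : M x -> M y -> M (x + y).
Proof. by move=> hx hy; have := (proj2 hM) 1 x y hx hy; rewrite scale1r. Qed.
Lemma subZ a x : M x -> M (a *: x).
Proof. by move=> hx; have := (proj2 hM) a x 0 hx sub0; rewrite addr0. Qed.
Lemma subN x : M x -> M (- x).
Proof. by move=> hx; rewrite -scaleN1r; apply: subZ. Qed.
Lemma subB x y : M x -> M y -> M (x - y).
Proof. by move=> hx hy; apply: subD => //; apply: subN. Qed.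

Lemma proj_uniq x y1 y2 : M y1 -> orth ip M (x - y1) -> M y2 -> orth ip M (x - y2) -> y1 = y2.
Proof.
move=> m1 o1 m2 o2; apply/eqP; rewrite -subr_eq0; apply/eqP; apply: (ip_eq0 (ip:=ip)).
have e : (x - y2) - (x - y1) = y1 - y2 by rewrite opprB addrC addrA subrK.
have m12 : M (y1 - y2) by apply: subB.
by rewrite -{1}e (ipBl ip) o1 // o2 // subr0.
Qed.

Lemma oproj_eq x y : M y -> orth ip M (x - y) -> oproj ip M x = y.
Proof.
move=> my oy; have ex : exists y, M y /\ orth ip M (x - y) by exists y.
have [h1 h2] := epsilon_spec (inhabits 0) _ ex.
exact: (proj_uniq h1 h2 my oy).
Qed.
End Sub.

Lemma parallel (a b : H) : nr (a + b) ^+ 2 + nr (a - b) ^+ 2 = 2 * nr a ^+ 2 + 2 * nr b ^+ 2.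
Proof.
apply: complexI; rewrite !rcD !(rcM 2) -!(ip_nr ip) !ipDl !(ipNl ip) !(ipDr ip) !(ipNr ip) c2; ring.
Qed.

Lemma proj_exists M x : closed_subspace M -> exists y, M y /\ orth ip M (x - y).
Proof.
move=> [hM cM].
pose E := [set r | exists2 m, M m & r = nr (x - m)].
have E0 : E !=set0 by exists (nr (x - 0)), 0 => //; exact: sub0.
have Elb : lbound E 0 by move=> r [m _ ->]; exact: nr_ge0.
have hE : has_inf E by split => //; exists 0.
set d := inf E.
have hd m : M m -> d <= nr (x - m) by move=> mm; apply: (ge_inf hE.2); exists m.
have d0 : 0 <= d by apply: lb_le_inf.
have hm n : exists m, M m /\ nr (x - m) < d + n.+1%:R^-1.
  have np : 0 < n.+1%:R^-1 :> R by rewrite invr_gt0 ltr0Sn.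
  have [r [m mm ->] hr] := inf_adherent np hE.
  by exists m.
have [m hm'] := boolp.choice hm.
have mid n k : M (2^-1 *: (m n + m k)) by apply: (subZ hM); apply: (subD hM); [exact: (hm' n).1|exact: (hm' k).1].
have cauchy_m : forall e, 0 < e -> exists N, forall n k, (N <= n)%N -> (N <= k)%N -> nr (m n - m k) < e.
  move=> e e0.
  have ep : 0 < e ^+ 2 / (8 * d + 5) by rewrite divr_gt0 ?exprn_gt0 //; lra.
  have [N hN] := archi_inv ep.
  exists N => n k nN kN.
  set a := x - m n; set b := x - m k.
  have par := parallel a b.
  have ab : a + b = 2%:C *: (x - 2^-1 *: (m n + m k)).
    rewrite c2 scalerBr scalerA mulfV ?pnatr_eq0 // scale1r scaler_nat mulr2n /a /b.
    by rewrite opprD addrACA.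
  have nab : nr (a + b) = 2 * nr (x - 2^-1 *: (m n + m k)).
    by rewrite ab nrZ normc_def /= expr0n /= addr0 sqrtr_sqr ger0_norm.
  have amb : a - b = m k - m n by rewrite /a /b opprB addrC addrA subrK.
  have hmid := hd _ (mid n k).
  have ha := (hm' n).2; have hb := (hm' k).2.
  have ha0 := nr_ge0 a; have hb0 := nr_ge0 b.
  have en : n.+1%:R^-1 <= N.+1%:R^-1 :> R by rewrite lef_pV2 ?posrE ?ltr0Sn // ler_nat.
  have ek : k.+1%:R^-1 <= N.+1%:R^-1 :> R by rewrite lef_pV2 ?posrE ?ltr0Sn // ler_nat.
  have en0 : 0 < n.+1%:R^-1 :> R by rewrite invr_gt0 ltr0Sn.
  have ek0 : 0 < k.+1%:R^-1 :> R by rewrite invr_gt0 ltr0Sn.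
  have eN1 : N.+1%:R^-1 <= 1 :> R by rewrite invf_le1 ?ltr0Sn // ler1n.
  have hN' : N.+1%:R^-1 * (8 * d + 5) < e ^+ 2 by rewrite -ltr_pdivlMr //; lra.
  set en' := n.+1%:R^-1 in en en0 ha; set ek' := k.+1%:R^-1 in ek ek0 hb; set eta := N.+1%:R^-1 in en ek eN1 hN'.
  have sqa : nr a ^+ 2 <= (d + en') ^+ 2 by rewrite ler_pXn2r ?nnegrE //; lra.
  have sqb : nr b ^+ 2 <= (d + ek') ^+ 2 by rewrite ler_pXn2r ?nnegrE //; lra.
  have sqm : 4 * d ^+ 2 <= nr (a + b) ^+ 2.
    by rewrite nab exprMn (_ : 2 ^+ 2 = 4) ?ler_pM2l; [rewrite ler_pXn2r ?nnegrE ?nr_ge0|lra|rewrite expr2; lra].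
  have q : nr (a - b) ^+ 2 < e ^+ 2 by nra.
  rewrite -opprB -amb nrN.
  by move: q; rewrite ltr_pXn2r ?nnegrE ?nr_ge0 // ltW.
have [y my] := cauchyH cauchy_m.
have My : M y by apply: (closed_cvg _ cM _ _ my); apply: nearW => n; exact: (hm' n).1.
exists y; split => //.
have dy : nr (x - y) <= d.
  rewrite leNgt; apply/negP => hlt.
  set e := nr (x - y) - d.
  have e2 : 0 < e / 2 by rewrite divr_gt0 // /e subr_gt0.
  have [N1 hN1] := archi_inv e2.
  have [N2 hN2] := (cvgHP m y).1 my _ e2.
  have := hN2 (maxn N1 N2) (leq_maxr _ _).
  have := (hm' (maxn N1 N2)).2.
  have : (maxn N1 N2).+1%:R^-1 <= N1.+1%:R^-1 :> R by rewrite lef_pV2 ?posrE ?ltr0Sn // ler_nat ltnS leq_maxl.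
  have := nrD (x - m (maxn N1 N2)) (m (maxn N1 N2) - y).
  rewrite addrA subrK -[nr (y - _)]nrN opprB.
  rewrite /e in e2 hN1 *; move: hN1 hlt; set p := (maxn N1 N2).+1%:R^-1; set q := N1.+1%:R^-1; clearbody p q d; lra.
move=> z mz; set w := x - y; set c := ip w z.
set Q := nr z ^+ 2; set t := (Q + 1)^-1.
have Q0 : 0 <= Q by rewrite /Q sqr_ge0.
have t0 : 0 < t by rewrite invr_gt0; lra.
have tQ : t * Q <= 1 by rewrite /t mulrC ler_pdivrMr; lra.
set s := t%:C * c.
have ms : M (y + s *: z) by apply: (subD hM) => //; apply: (subZ hM).
have h1 := hd _ ms.
have ex : x - (y + s *: z) = w - s *: z by rewrite opprD addrA.
rewrite ex in h1.
have h2 : nr w ^+ 2 <= nr (w - s *: z) ^+ 2 by rewrite ler_pXn2r ?nnegrE ?nr_ge0 //; lra.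
set k := complex.Re `|c|.
have ck : c * c^* = (k ^+ 2)%:C by rewrite -normCK nrC rmorphXn.
have st : (t%:C)^* = t%:C by rewrite conj_Creal // ger0_real // ler0c ltW.
clearbody w.
have expand : nr (w - s *: z) ^+ 2 = nr w ^+ 2 - 2 * t * k ^+ 2 + t ^+ 2 * k ^+ 2 * Q.
  apply: complexI; rewrite -(ip_nr ip) (ipBl ip) !(ipBr ip) !ipZl !(ipZr ip)  -/c [ip z w]ipC -/c.
  have cs : (t%:C * c)^* = t%:C * c^* by rewrite rmorphM /= st.
  rewrite !(ip_nr ip) -/Q /s cs.
  rewrite rcD rcB (rcM (2*t) (k^+2)) (rcM 2 t) (rcM (t^+2 * k^+2) Q) (rcM (t^+2) (k^+2)) -ck !rcX c2; ring.
rewrite expand in h2.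
have k2 : 0 <= k ^+ 2 by rewrite sqr_ge0.
have h3 : 0 <= t * (t * Q * k ^+ 2 - 2 * k ^+ 2) by lra.
rewrite pmulr_rge0 // in h3.
have h4 : t * Q * k ^+ 2 <= k ^+ 2 by rewrite ler_piMl.
have kk : k ^+ 2 = 0 by lra.
move/eqP: kk; rewrite expf_eq0 /= => /eqP k0.
by apply/normr0_eq0; rewrite nrC -/k k0.
Qed.

End Proj.

Section ProjProps.
Variables (R : realType) (H : completeNormedModType R[i]) (ip : inner_product H).
Variable M : set H.
Hypothesis hM : closed_subspace M.
Local Notation P := (oproj ip M).

Lemma oprojP x : M (P x) /\ orth ip M (x - P x).
Proof. exact: (epsilon_spec (inhabits 0) _ (proj_exists ip x hM)). Qed.
Lemma PM x : M (P x). Proof. exact: (oprojP x).1. Qed.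
Lemma PO x : orth ip M (x - P x). Proof. exact: (oprojP x).2. Qed.

Lemma P_id m : M m -> P m = m.
Proof. by move=> mm; apply: (oproj_eq hM.1) => // z _; rewrite subrr (ip0l ip). Qed.

Lemma P_lin a x y : P (a *: x + y) = a *: P x + P y.
Proof.
apply: (oproj_eq hM.1); first by apply: (subD hM.1); [apply: (subZ hM.1); exact: PM|exact: PM].
move=> m mm.
have -> : a *: x + y - (a *: P x + P y) = a *: (x - P x) + (y - P y).
  by rewrite scalerBr opprD addrACA.
by rewrite ipDl ipZl !PO // mulr0 addr0.
Qed.

Lemma P0 : P 0 = 0. Proof. by apply: P_id; exact: (sub0 hM.1). Qed.
Lemma PD x y : P (x + y) = P x + P y.
Proof. by have := P_lin 1 x y; rewrite !scale1r. Qed.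
Lemma PZ a x : P (a *: x) = a *: P x.
Proof. by rewrite -[a *: x]addr0 P_lin P0 addr0. Qed.
Lemma PN x : P (- x) = - P x.
Proof. by rewrite -scaleN1r PZ scaleN1r. Qed.
Lemma PB x y : P (x - y) = P x - P y.
Proof. by rewrite PD PN. Qed.

Lemma ipPr x m : M m -> ip x m = ip (P x) m.
Proof. by move=> mm; have := PO x mm; rewrite (ipBl ip) => /eqP; rewrite subr_eq0 => /eqP. Qed.
Lemma ipPl x m : M m -> ip m x = ip m (P x).
Proof. by move=> mm; rewrite ipC (ipPr _ mm) -ipC. Qed.

Lemma nrP x : nr (P x) <= nr x.
Proof.
have o : ip (P x) (x - P x) = 0 by rewrite ipC PO ?conjC0 //; exact: PM.
have := pythag o; rewrite addrC subrK => e.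
rewrite -(@ler_pXn2r _ 2) ?nnegrE ?nr_ge0 // e lerDl sqr_ge0 //.
Qed.

Lemma P_cont : continuous P.
Proof.
apply/contHP => x e e0; exists e => // y h.
by rewrite -PB; apply: le_lt_trans (nrP _) h.
Qed.

End ProjProps.

Section Positive.
Variables (R : realType) (H : completeNormedModType R[i]) (ip : inner_product H).
Variable D : H -> H.
Hypothesis hD : positive_op ip D.

Lemma D_lin a x y : D (a *: x + y) = a *: D x + D y. Proof. exact: hD.1.1. Qed.
Lemma D0 : D 0 = 0.
Proof. by have := D_lin (-1) 0 0; rewrite !scaleN1r !addNr. Qed.
Lemma DD x y : D (x + y) = D x + D y.
Proof. by have := D_lin 1 x y; rewrite !scale1r. Qed.
Lemma DZ a x : D (a *: x) = a *: D x.
Proof. by rewrite -[a *: x]addr0 D_lin D0 addr0. Qed.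
Lemma DN x : D (- x) = - D x.
Proof. by rewrite -scaleN1r DZ scaleN1r. Qed.
Lemma DB x y : D (x - y) = D x - D y.
Proof. by rewrite DD DN. Qed.
Lemma Dpos x : 0 <= ip (D x) x. Proof. exact: hD.2. Qed.
Lemma Dreal x : (ip (D x) x)^* = ip (D x) x.
Proof. exact/conj_Creal/ger0_real/Dpos. Qed.

Lemma Dsa x y : ip (D x) y = ip x (D y).
Proof.
set p := ip (D x) y; set r := ip (D y) x.
rewrite [ip x (D y)]ipC -/r.
have h1 : p^* + r^* = p + r.
  have := Dreal (x + y); rewrite DD !ipDl !(ipDr ip) -/p -/r !rmorphD /= !Dreal => e.
  apply/eqP; rewrite -subr_eq0; apply/eqP.
  have -> : p^* + r^* - (p + r) = (ip (D x) x + p^* + (r^* + ip (D y) y)) - (ip (D x) x + p + (r + ip (D y) y)) by ring.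
  by rewrite e subrr.
have h2 : r - p = p^* - r^*.
  have := Dreal (x + 'i *: y); rewrite DD DZ !ipDl !(ipDr ip) !ipZl !(ipZr ip) -/p -/r.
  rewrite !rmorphD !rmorphM /= !Dreal !conjCK !conjCi => e.
  apply: (mulfI (neq0Ci _)); apply/eqP; rewrite -subr_eq0; apply/eqP.
  set A := ip (D x) x; set B := ip (D y) y.
  have -> : 'i * (r - p) - 'i * (p^* - r^*) =
    (A + - 'i * p + ('i * r + 'i * (- 'i * B))) - (A + 'i * p^* + (- 'i * r^* + - 'i * ('i * B))) by ring.
  by rewrite -e subrr.
apply: (mulfI (_ : 2 != 0 :> R[i])); first by rewrite pnatr_eq0.
apply/eqP; rewrite -subr_eq0; apply/eqP.
have -> : 2 * p - 2 * r^* = (p + r - (p^* + r^*)) + ((p^* - r^*) - (r - p)) by ring.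
by rewrite h1 h2 !subrr addr0.
Qed.

Lemma Dker s : ip (D s) s = 0 -> D s = 0.
Proof.
move=> hs; set v := D s.
set A := nr v ^+ 2.
set B := complex.Re (ip (D v) v).
have B0 : 0 <= B by rewrite /B -ler0c RRe_real ?Dpos // ger0_real // Dpos.
have eB : ip (D v) v = B%:C by rewrite /B RRe_real // ger0_real // Dpos.
have key t : 0 <= 2 * t * A + t ^+ 2 * B.
  have := Dpos (s + t%:C *: v); rewrite DD DZ !ipDl !(ipDr ip) !ipZl !(ipZr ip) hs eB.
  rewrite [ip (D v) s]Dsa -/v (ip_nr ip) -/A conj_Creal ?complex_real //.
  rewrite -ler0c !rcD !rcM c2.
  by move=> h; apply: le_trans h _; rewrite le_eqVlt; apply/orP; left; apply/eqP; ring.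
have := key (- A / (B + 1)).
have B1 : B + 1 != 0 by rewrite gt_eqF //; lra.
have -> : 2 * (- A / (B + 1)) * A + (- A / (B + 1)) ^+ 2 * B = - (A ^+ 2 * (B + 2)) / (B + 1) ^+ 2.
  by field.
rewrite pmulr_lge0 ?invr_gt0 ?exprn_gt0 ?oppr_ge0 //; last by lra.
have := mulr_ge0 (sqr_ge0 A) B0 => h1 h2.
have A2 : A ^+ 2 = 0 by have := sqr_ge0 A; lra.
move/eqP: A2; rewrite expf_eq0 /= /A expf_eq0 /= => /eqP; exact: nr_eq0.

Qed.

End Positive.

Lemma ReM (R : realType) (a : R) (z : R[i]) : complex.Re (a%:C * z) = a * complex.Re z.
Proof. by case: z => x y; rewrite /= mul0r subr0. Qed.
Lemma ReD (R : realType) (z w : R[i]) : complex.Re (z + w) = complex.Re z + complex.Re w.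
Proof. by case: z; case: w. Qed.
Lemma Re_le (R : realType) (z : R[i]) : `|complex.Re z| <= complex.Re `|z|.
Proof. by rewrite -lecR -nrC normc_ge_Re. Qed.
Lemma nrZR (R : realType) (H : completeNormedModType R[i]) (c : R) (x : H) :
  nr (c%:C *: x) = `|c| * nr x.
Proof. exact: (@nrRZ R H c x). Qed.

Section Core.
Variables (R : realType) (H : completeNormedModType R[i]) (ip : inner_product H).
Variables (D : H -> H) (S : set H).
Hypothesis hD : positive_op ip D.
Hypothesis hS : closed_subspace S.
Local Notation PS := (oproj ip S).
Definition Mset := [set PS (D s) | s in S].
Hypothesis hMc : closed Mset.

Let sS := hS.1.

Lemma PSD_lin a x y : PS (D (a *: x + y)) = a *: PS (D x) + PS (D y).
Proof. by rewrite (D_lin hD) (P_lin ip hS). Qed.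
Lemma PSD0 : PS (D 0) = 0. Proof. by rewrite (D0 hD) (P0 ip hS). Qed.
Lemma PSDB x y : PS (D (x - y)) = PS (D x) - PS (D y).
Proof. by rewrite (DB hD) (PB ip hS). Qed.

Lemma M_S m : Mset m -> S m. Proof. by case=> s _ <-; exact: PM. Qed.

Lemma M_sub : Pilot.Defs.subspace Mset.
Proof.
split; first by exists 0; [exact: (sub0 sS)|exact: PSD0].
move=> a _ _ [s1 h1 <-] [s2 h2 <-]; exists (a *: s1 + s2); last exact: PSD_lin.
by apply: (subD sS) => //; apply: (subZ sS).
Qed.
Lemma hMs : closed_subspace Mset. Proof. by split; [exact: M_sub|exact: hMc]. Qed.

Lemma K3 s : S s -> PS (D s) = 0 -> D s = 0.
Proof.
move=> ss h; apply: (Dker hD).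
by rewrite (ipPr ip hS _ ss) h (ip0l ip).
Qed.

Lemma K7 r : S r -> orth ip Mset r -> PS (D r) = 0.
Proof.
move=> sr o; apply: (ip_eq0 (ip:=ip)); set u := PS (D r).
have su : S u by exact: PM.
rewrite -(ipPr ip hS _ su) (Dsa hD) (ipPl ip hS _ sr).
by apply: o; exists u.
Qed.

Lemma K6 m : Mset m -> PS (D m) = 0 -> m = 0.
Proof.
move=> [s ss <-] h; apply: (ip_eq0 (ip:=ip)).
have sm : S (PS (D s)) by exact: PM.
by rewrite -(ipPr ip hS _ sm) (Dsa hD) (K3 sm h) (ip0r ip).
Qed.

Lemma K5 y : Mset (PS (D y)).
Proof.
set z := PS (D y); set w := oproj ip Mset z; set r := z - w.
have mw : Mset w by exact: (PM ip hMs).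
have sz : S z by exact: PM.
have sr : S r by apply: (subB sS) => //; exact: M_S.
have o : orth ip Mset r by exact: (PO ip hMs).
have Dr := K3 sr (K7 sr o).
have e1 : ip z r = 0 by rewrite /z -(ipPr ip hS _ sr) (Dsa hD) Dr (ip0r ip).
have e2 : ip w r = 0 by rewrite ipC o // conjC0.
have r0 : r = 0 by apply: (ip_eq0 (ip:=ip)); rewrite {1}/r (ipBl ip) e1 e2 subrr.
have zw : z = w by apply/eqP; rewrite -subr_eq0 -/r r0.
by rewrite zw.
Qed.

Lemma g_ex u : Mset u -> exists z, Mset z /\ PS (D z) = u.
Proof.
move=> [s ss <-]; set z := oproj ip Mset s; exists z; split; first exact: (PM ip hMs).
have sr : S (s - z) by apply: (subB sS) => //; apply: M_S; exact: (PM ip hMs).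
have := K7 sr (PO ip hMs s); rewrite PSDB => /eqP; rewrite subr_eq0 => /eqP.
by move=> ->.
Qed.

Definition g u := epsilon (inhabits 0) (fun z => Mset z /\ PS (D z) = u).

Lemma g_spec u : Mset u -> Mset (g u) /\ PS (D (g u)) = u.
Proof. by move=> mu; exact: (epsilon_spec _ _ (g_ex mu)). Qed.

Lemma g_uniq u z : Mset z -> PS (D z) = u -> g u = z.
Proof.
move=> mz e; have mu : Mset u by rewrite -e; exact: K5.
have [mg eg] := g_spec mu.
apply/eqP; rewrite -subr_eq0; apply/eqP; apply: K6.
  by apply: (subB M_sub).
by rewrite PSDB eg e subrr.
Qed.

Lemma g_lin a u v : Mset u -> Mset v -> g (a *: u + v) = a *: g u + g v.
Proof.
move=> mu mv; have [m1 e1] := g_spec mu; have [m2 e2] := g_spec mv.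
apply: g_uniq; first by apply: (subD M_sub) => //; apply: (subZ M_sub).
by rewrite PSD_lin e1 e2.
Qed.

Lemma g0 : g 0 = 0.
Proof. by apply: g_uniq; [exact: (sub0 M_sub)|exact: PSD0]. Qed.

Lemma g_sym u v : Mset u -> Mset v -> ip (g u) v = ip u (g v).
Proof.
move=> mu mv; have [m1 e1] := g_spec mu; have [m2 e2] := g_spec mv.
have s1 := M_S m1; have s2 := M_S m2.
rewrite -{1}e2 -(ipPl ip hS _ s1) -(Dsa hD) (ipPr ip hS _ s2) e1 //.
Qed.

End Core.

Section Bound.
Variables (R : realType) (H : completeNormedModType R[i]) (ip : inner_product H).
Variables (D : H -> H) (S : set H).
Hypothesis hD : positive_op ip D.
Hypothesis hS : closed_subspace S.
Local Notation PS := (oproj ip S).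
Local Notation MM := (Mset ip D S).
Local Notation gg := (g ip D S).
Hypothesis hMc : closed MM.

Lemma gM u : MM u -> MM (gg u). Proof. by move=> mu; exact: (g_spec hD hS hMc mu).1. Qed.

Lemma g_bound1 : exists M0, 0 <= M0 /\ forall u, MM u -> nr u <= 1 -> nr (gg u) <= M0.
Proof.
pose F := [set f : HR H -> R^o | exists u, MM u /\ nr u <= 1 /\
   f = (fun v : HR H => complex.Re (ip v (gg u)))].
have hF : forall f, F f -> bounded_fun_norm f /\ linear f.
  move=> f [u [mu [nu ->]]]; split.
  - move=> r; exists (r * nr (gg u)) => x hx.
    apply: le_trans (Re_le _) _; apply: le_trans (CS ip x (gg u)) _.
    have hx' : nr (x : H) <= r := hx.
    apply: ler_wpM2r; [exact: nr_ge0 | exact: hx'].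
  - move=> a x y /=.
    have -> : (a *: x + y : HR H) = (a%:C *: (x : H) + y : H) by [].
    by rewrite ipDl ipZl ReD ReM.
have pb : pointwise_bounded F.
  move=> x; set w := oproj ip MM x.
  have mw : MM w by exact: (PM ip (hMs hD hS hMc)).
  exists (nr (gg w)) => f [u [mu [nu ->]]].
  rewrite (ipPr ip (hMs hD hS hMc) x (gM mu)) -/w ipC (g_sym hD hS hMc mu mw).
  apply: le_trans (Re_le _) _; rewrite norm_conjC.
  apply: le_trans (CS ip u (gg w)) _.
  by rewrite -[X in _ <= X]mul1r ler_wpM2r // nr_ge0.
have [M0 hM0] := Banach_Steinhauss hF pb 1.
have m0 : MM 0 by exact: (sub0 (M_sub hD hS)).
have F0 : F (fun v : HR H => complex.Re (ip v (gg 0))).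
  by exists 0; split => //; split => //; rewrite nr0.
exists M0; have M00 : 0 <= M0.
  have := hM0 _ F0 0; rewrite /= (ip0l ip) normr0 => h.
  exact: le_trans (normr_ge0 _) (h ler01).
split => //.
move=> u mu nu.
have [->|gu0] := eqVneq (gg u) 0; first by rewrite nr0.
have ng : 0 < nr (gg u) by rewrite lt_def nr_ge0 andbT; apply/eqP => /nr_eq0; apply/eqP.
set c := (nr (gg u))^-1.
have Fu : F (fun v : HR H => complex.Re (ip v (gg u))) by exists u.
have := hM0 _ Fu (c%:C *: gg u : H).
have nv : nr (c%:C *: gg u) = 1 by rewrite nrZR /c ger0_norm ?invr_ge0 ?nr_ge0 // mulVf // gt_eqF.
have -> : complex.Re (ip (c%:C *: gg u) (gg u)) = nr (gg u).
  by rewrite ipZl (ip_nr ip) -rcM ReC /c expr2 mulrA mulVf ?mul1r // gt_eqF.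
rewrite ger0_norm ?nr_ge0 //; apply.
have hv : nr (c%:C *: gg u) <= 1 by rewrite nv.
exact: hv.
Qed.

Lemma g_bound : exists C, 0 <= C /\ forall u, MM u -> nr (gg u) <= C * nr u.
Proof.
have [M0 [M00 hM]] := g_bound1; exists M0; split => // u mu.
have [->|u0] := eqVneq u 0.
  by rewrite (g0 hD hS hMc) nr0 mulr0.
have nu : 0 < nr u by rewrite lt_def nr_ge0 andbT; apply/eqP => /nr_eq0; apply/eqP.
set c := (nr u)^-1.
have c0 : 0 < c by rewrite invr_gt0.
have mu' : MM (c%:C *: u) by apply: (subZ (M_sub hD hS)).
have := hM _ mu'; rewrite nrZR (ger0_norm (ltW c0)) /c mulVf ?gt_eqF // => /(_ (lexx _)).
have -> : gg (c%:C *: u) = c%:C *: gg u.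
  by have := g_lin hD hS hMc c%:C mu (sub0 (M_sub hD hS)); rewrite !addr0 (g0 hD hS hMc) addr0.
rewrite nrZR (ger0_norm (ltW c0)) /c => h.
by rewrite -ler_pdivrMr // mulrC.
Qed.

End Bound.

Section Final.
Variables (R : realType) (H : completeNormedModType R[i]) (ip : inner_product H).
Variables (D : H -> H) (S : set H).
Hypothesis hD : positive_op ip D.
Hypothesis hS : closed_subspace S.
Local Notation PS := (oproj ip S).
Local Notation MM := (Mset ip D S).
Local Notation gg := (g ip D S).
Hypothesis hMc : closed MM.
Let sS := hS.1.

Definition dd y := gg (PS (D y)).
Definition QQ x := PS x + dd (x - PS x).

Lemma dd_M y : MM (dd y). Proof. exact: (gM hD hS hMc (K5 hD hS hMc y)). Qed.
Lemma dd_S y : S (dd y). Proof. exact: (M_S hS (dd_M y)). Qed.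
Lemma dd_spec y : PS (D (dd y)) = PS (D y). Proof. exact: (g_spec hD hS hMc (K5 hD hS hMc y)).2. Qed.
Lemma dd_lin a x y : dd (a *: x + y) = a *: dd x + dd y.
Proof. by rewrite /dd (PSD_lin hD hS) (g_lin hD hS hMc) //; exact: (K5 hD hS hMc). Qed.
Lemma dd0 : dd 0 = 0. Proof. by rewrite /dd (PSD0 hD hS) (g0 hD hS hMc). Qed.
Lemma ddD x y : dd (x + y) = dd x + dd y.
Proof. by have := dd_lin 1 x y; rewrite !scale1r. Qed.
Lemma ddZ a x : dd (a *: x) = a *: dd x.
Proof. by rewrite -[a *: x]addr0 dd_lin dd0 addr0. Qed.
Lemma ddB x y : dd (x - y) = dd x - dd y.
Proof. by rewrite -scaleN1r ddD ddZ scaleN1r. Qed.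

Lemma dd_cont : continuous dd.
Proof.
apply/contHP => x e e0.
have [C [C0 hC]] := g_bound hD hS hMc.
have cPD : continuous (PS \o D).
  by move=> z; apply: continuous_comp; [exact: hD.1.2 | exact: (@P_cont _ _ ip S hS (D z))].
have C1 : 0 < C + 1 by lra.
set eta := e / (C + 1).
have eta0 : 0 < eta by rewrite divr_gt0.
have eeta : eta * (C + 1) = e by rewrite /eta mulfVK // gt_eqF.
have [del hdel hdel'] := (contHP (PS \o D)).2 cPD x eta eta0.
exists del => // y hy.
rewrite -ddB; apply: le_lt_trans (hC _ (K5 hD hS hMc _)) _.
rewrite (PSDB hD hS).
have := hdel' y hy; rewrite /= => h.
have : C * nr (PS (D x) - PS (D y)) <= C * eta by rewrite ler_wpM2l // ltW.
clearbody eta; nra.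
Qed.

Lemma QQ_S x : S (QQ x). Proof. by apply: (subD sS); [exact: PM|exact: dd_S]. Qed.
Lemma QQ_id s : S s -> QQ s = s.
Proof. by move=> ss; rewrite /QQ (P_id ip hS ss) subrr dd0 addr0. Qed.
Lemma QQ_lin a x y : QQ (a *: x + y) = a *: QQ x + QQ y.
Proof.
rewrite /QQ (P_lin ip hS).
have -> : a *: x + y - (a *: PS x + PS y) = a *: (x - PS x) + (y - PS y).
  by rewrite scalerBr opprD addrACA.
by rewrite dd_lin scalerDr addrACA.
Qed.
Lemma QQ_PSD x : PS (D (QQ x)) = PS (D x).
Proof.
have PSDD u v : PS (D (u + v)) = PS (D u) + PS (D v).
  by have := PSD_lin hD hS 1 u v; rewrite !scale1r.
by rewrite /QQ PSDD dd_spec -PSDD addrC subrK.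
Qed.

Lemma QQ_adj x y : ip (D (QQ x)) y = ip (D x) (QQ y).
Proof.
have sx := QQ_S x; have sy := QQ_S y.
rewrite (Dsa hD) (ipPl ip hS _ sx) -(QQ_PSD y) -(ipPl ip hS _ sx) -(Dsa hD).
by rewrite (ipPr ip hS _ sy) QQ_PSD -(ipPr ip hS _ sy).
Qed.

Lemma QQ_cont : continuous QQ.
Proof.
move=> x; rewrite /QQ; apply: continuousD; first exact: (@P_cont _ _ ip S hS).
apply: (@continuous_comp _ _ _ (fun z => z - PS z) dd).
  by apply: continuousB; [exact: cvg_id | exact: (@P_cont _ _ ip S hS)].
exact: dd_cont.
Qed.

Lemma dd_uniq K D' d' : (forall z, PS (D' z) = PS (D z)) -> dfactor_in ip K D' S d' ->
  forall y, (K `&` orth ip S) y -> d' y = dd y.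
Proof.
move=> hD' [_ h1 h2] y hy.
have eM : [set PS (D' s) | s in S] = MM.
  by apply/seteqP; split => _ [s ss <-]; exists s => //; rewrite hD'.
have md' : MM (d' y).
  by have := h2 y hy; rewrite eM -((closure_id MM).1 hMc).
apply/eqP; rewrite -subr_eq0; apply/eqP; apply: (K6 hD hS).
  by apply: (subB (M_sub hD hS)) => //; exact: dd_M.
by rewrite (PSDB hD hS) dd_spec -hD' h1 // hD' subrr.
Qed.

End Final.

Lemma PDSeq (R : realType) (H : completeNormedModType R[i]) (ip : inner_product H)
  (D : H -> H) (S : set H) (hD : positive_op ip D) (hS : closed_subspace S)
  (hMc : closed (Mset ip D S)) (K : set H) (D' : H -> H) :
  (forall z, oproj ip S (D' z) = oproj ip S (D z)) ->
  dfactor_in ip K D' S (dd ip D S) ->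
  (forall x, K x -> K (x - oproj ip S x)) ->
  forall x, K x -> PDS_in ip K D' S x = QQ ip D S x.
Proof.
move=> hD' hfac hK x Kx; rewrite /PDS_in /QQ /=.
set d' := epsilon _ _.
have hd' : dfactor_in ip K D' S d' := epsilon_spec _ _ (ex_intro _ _ hfac).
rewrite (dd_uniq hD hS hMc hD' hd') //; split; [exact: hK | exact: (PO ip hS x)].
Qed.

Theorem proposition2p10 (R : realType) (H : completeNormedModType R[i])
  (ip : inner_product H) (D : H -> H) (S T : set H) :
  positive_op ip D ->
  closed_subspace S -> closed_subspace T -> S `<=` T ->
  (forall x, oproj ip T (D x) = D (oproj ip T x)) ->
  closed (range (fun x => oproj ip S (D (oproj ip S x)))) ->
  let D1 := fun x => oproj ip T (D x) in
  [/\ compatible_in ip setT D S,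
      compatible_in ip T D1 S,
      (forall x, T x -> PDS_in ip setT D S x = PDS_in ip T D1 S x) &
      (forall x, orth ip T x -> PDS_in ip setT D S x = 0)].
Proof.
move=> hD hS hT hST hcomm hcl D1.
have sS := hS.1; have sT := hT.1.
have hMc : closed (Mset ip D S).
  have -> : Mset ip D S = range (fun x => oproj ip S (D (oproj ip S x))).
    apply/seteqP; split.
    - by move=> _ [s ss <-]; exists s => //; rewrite (P_id ip hS ss).
    - by move=> _ [x _ <-]; exists (oproj ip S x) => //; exact: (PM ip hS).
  exact: hcl.
have PSPT z : oproj ip S (oproj ip T z) = oproj ip S z.
  apply: (oproj_eq sS); first exact: (PM ip hS).
  move=> m sm; rewrite (ipBl ip) -(ipPr ip hT _ (hST _ sm)) -(ipPr ip hS _ sm) subrr //.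
have bQ K : S `<=` K -> bounded_on K K (QQ ip D S).
  move=> hSK; split; first by move=> x _; apply: hSK; exact: (QQ_S hD hS hMc).
  split; first by move=> a x y _ _; exact: (QQ_lin hD hS hMc).
  exact: continuous_subspaceT (QQ_cont hD hS hMc).
have bd K : bounded_on (K `&` orth ip S) S (dd ip D S).
  split; first by move=> y _; exact: (dd_S hD hS hMc).
  split; first by move=> a x y _ _; exact: (dd_lin hD hS hMc).
  exact: continuous_subspaceT (dd_cont hD hS hMc).
have facAll : dfactor_in ip setT D S (dd ip D S).
  split; first exact: bd.
    by move=> y _; exact: (dd_spec hD hS hMc).
  by move=> y _; apply: subset_closure; exact: (dd_M hD hS hMc).
have facT : dfactor_in ip T D1 S (dd ip D S).
  split; first exact: bd.
    by move=> y _; rewrite /D1 !PSPT; exact: (dd_spec hD hS hMc).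
  move=> y _; apply: subset_closure; have [s ss e] := dd_M hD hS hMc y.
  by exists s => //; rewrite /D1 PSPT.
have eqAll x : PDS_in ip setT D S x = QQ ip D S x.
  by apply: (PDSeq hD hS hMc _ facAll).
have eqT x : T x -> PDS_in ip T D1 S x = QQ ip D S x.
  apply: (PDSeq hD hS hMc _ facT) => [z|z Tz]; first by rewrite /D1 PSPT.
  by apply: (subB sT) => //; apply: hST; exact: (PM ip hS).
split.
- exists (QQ ip D S); split.
  + exact: bQ.
  + by move=> x _; apply: (QQ_id hD hS hMc); exact: (QQ_S hD hS hMc).
  + apply/seteqP; split; first by move=> _ [x _ <-]; exact: (QQ_S hD hS hMc).
    by move=> s ss; exists s => //; exact: (QQ_id hD hS hMc).
  + by move=> x y _ _; exact: (QQ_adj hD hS hMc).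
- exists (QQ ip D S); split.
  + exact: bQ.
  + by move=> x _; apply: (QQ_id hD hS hMc); exact: (QQ_S hD hS hMc).
  + apply/seteqP; split; first by move=> _ [x _ <-]; exact: (QQ_S hD hS hMc).
    by move=> s ss; exists s; [exact: hST | exact: (QQ_id hD hS hMc)].
  + move=> x y Tx Ty; rewrite /D1 -(ipPr ip hT _ Ty).
    rewrite -(ipPr ip hT _ (hST _ (QQ_S hD hS hMc y))).
    exact: (QQ_adj hD hS hMc).
- by move=> x Tx; rewrite eqAll eqT.
- move=> x ox; rewrite eqAll /QQ.
  have PSx : oproj ip S x = 0.
    apply: (oproj_eq sS); first exact: (sub0 sS).
    by rewrite subr0 => m sm; apply: ox; exact: hST.
  have PTx : oproj ip T x = 0.
    by apply: (oproj_eq sT); [exact: (sub0 sT) | rewrite subr0].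
  have oDx : orth ip T (D x).
    by have := PO ip hT (D x); rewrite hcomm PTx (D0 hD) subr0.
  have PSDx : oproj ip S (D x) = 0.
    apply: (oproj_eq sS); first exact: (sub0 sS).
    by rewrite subr0 => m sm; apply: oDx; exact: hST.
  by rewrite PSx subr0 add0r /dd PSDx (g0 hD hS hMc).
Qed.
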